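(* Consider the chance-constrained network design problem described in the context, with $\alpha\in[0,1]$. For each commodity $k\in K$ define $$\bar d^k=\min_{z\in\{0,1\}^S}\Big\{\sum_{s=1}^S d^k(\omega_s)p_s(1-z_s)\ \Big|\ \sum_{s=1}^S p_sz_s\le\alpha\Big\}.$$ Then for every $y\in\{0,1\}^{|A|}$ satisfying $\sum_{s\in[S]}p_s\mathbf{1}\{SP(y,\omega_s)\text{ is infeasible}\}\le\alpha$ there exist $\bar x^k_{ij}\ge0$ ($k\in K$, $(i,j)\in A^k$) such that $$\sum_{j:(j,i)\in A^k}\bar x^k_{ji}=\sum_{j:(i,j)\in A^k}\bar x^k_{ij}\ \ \forall k\in K,\ i\in N\setminus\{O(k),D(k)\},$$ $$\sum_{k\in K:(i,j)\in A^k}\bar x^k_{ij}\le u_{ij}y_{ij}\ \ \forall (i,j)\in A,\qquad \sum_{j:(j,D(k))\in A^k}\bar x^k_{jD(k)}\ge\bar d^k\ \ \forall k\in K.$$ That is, these constraints (in variables $y$ and $\bar x$) are valid inequalities for the problem.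
   Context: Directed graph $G=(N,A)$; arc $(i,j)$ built at cost $f_{ij}\ge0$ with capacity $u_{ij}\ge0$ when $y_{ij}=1$. Commodities $K$, each with origin $O(k)$ and destination $D(k)$; admissible arcs $A^k=\{(i,j)\in A: j\neq O(k),\ i\neq D(k)\}$. Finitely many scenarios $\omega_s$, $s\in[S]=\{1,\dots,S\}$, with probabilities $p_s>0$, $\sum_s p_s=1$, and demands $d^k(\omega_s)\ge0$. $SP(y,\omega)$ is the system in flows $x^k_{ij}\ge0$ ($k\in K$, $(i,j)\in A^k$): flow conservation $\sum_{j:(j,i)\in A}x^k_{ji}=\sum_{j:(i,j)\in A}x^k_{ij}$ for all $k$ and $i\in N\setminus\{O(k),D(k)\}$ (sums over arcs in $A^k$); joint capacity $\sum_{k:(i,j)\in A^k}x^k_{ij}\le u_{ij}y_{ij}$ for all $(i,j)\in A$; demand $\sum_{j:(j,D(k))\in A^k}x^k_{jD(k)}\ge d^k(\omega)$ for all $k\in K$. The problem is $\min\{f^\top y: y\in\{0,1\}^{|A|},\ \sum_s p_s\mathbf 1\{SP(y,\omega_s)\text{ infeasible}\}\le\alpha\}$. *)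

(* Defs.v *)
From HB Require Import structures.
From mathcomp Require Import all_boot all_order all_algebra.
From mathcomp Require Import boolp.
Set Implicit Arguments. Unset Strict Implicit. Unset Printing Implicit Defensive.
Import Order.TTheory GRing.Theory Num.Theory.
Local Open Scope ring_scope.

Section Network.
Variables (R : realFieldType) (N K : finType).
Variables (A : {set N * N}) (O D : K -> N).

Definition Ak (k : K) : {set N * N} :=
  [set a in A | (a.2 != O k) && (a.1 != D k)].

(* The system SP(y, ·) with demand vector dem : K -> R and capacities u;
   flows x k a are only meaningful (and constrained) for a ∈ A^k. *)
Definition SP_feasible (u : N * N -> R) (y : N * N -> bool) (dem : K -> R) : Prop :=
  exists x : K -> N * N -> R,
    [/\ (forall k a, a \in Ak k -> 0 <= x k a),
        (forall k i, i != O k -> i != D k ->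
           \sum_(a in Ak k | a.2 == i) x k a = \sum_(a in Ak k | a.1 == i) x k a),
        (forall a, a \in A -> \sum_(k | a \in Ak k) x k a <= u a * (y a)%:R) &
        (forall k, dem k <= \sum_(a in Ak k | a.2 == D k) x k a)].

End Network.

(* dbar^k = min over z ∈ {0,1}^S with Σ p_s z_s ≤ α of Σ d^k(ω_s) p_s (1 - z_s).
   The fold starts at the value for z = 0, which is feasible when α ≥ 0, so this
   is exactly the minimum. *)
Definition dbar (R : realFieldType) (S : nat) (p : 'I_S -> R) (alpha : R)
  (dk : 'I_S -> R) : R :=
  let v0 := \sum_(s < S) dk s * p s in
  \big[Order.min/v0]_(z : {ffun 'I_S -> bool} |
       \sum_(s < S) p s * (z s)%:R <= alpha)
     \sum_(s < S) dk s * p s * (1 - (z s)%:R).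

(* Main.v *)
Require Import Defs.
From HB Require Import structures.
From mathcomp Require Import all_boot all_order all_algebra.
From mathcomp Require Import boolp.
Import Order.TTheory GRing.Theory Num.Theory.
Local Open Scope ring_scope.

Lemma bigmin_le_F (R : realFieldType) (I : finType) (P : pred I) (F : I -> R) x0 i :
  P i -> (\big[Order.min/x0]_(j | P j) F j <= F i)%O.
Proof.
move=> Pi; rewrite (bigD1 i) //= ge_min; by rewrite lexx.
Qed.

Theorem proposition2 (R : realFieldType) (N K : finType) (A : {set N * N})
  (O D : K -> N) (u : N * N -> R) (S : nat) (p : 'I_S -> R)
  (d : K -> 'I_S -> R) (alpha : R)
  (hu : forall a, a \in A -> 0 <= u a)
  (hp : forall s, 0 < p s) (hp1 : \sum_(s < S) p s = 1)
  (hd : forall k s, 0 <= d k s)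
  (halpha0 : 0 <= alpha) (halpha1 : alpha <= 1)
  (y : N * N -> bool)
  (hy : \sum_(s < S) p s * (~~ `[< SP_feasible A O D u y (fun k => d k s) >])%:R
          <= alpha) :
  SP_feasible A O D u y (fun k => dbar p alpha (d k)).
Proof.
set b := fun s => `[< SP_feasible A O D u y (fun k => d k s) >].
have HX : forall s : 'I_S, exists X : K -> N * N -> R, b s ->
    [/\ (forall k a, a \in Ak A O D k -> 0 <= X k a),
        (forall k i, i != O k -> i != D k ->
           \sum_(a in Ak A O D k | a.2 == i) X k a = \sum_(a in Ak A O D k | a.1 == i) X k a),
        (forall a, a \in A -> \sum_(k | a \in Ak A O D k) X k a <= u a * (y a)%:R) &
        (forall k, d k s <= \sum_(a in Ak A O D k | a.2 == D k) X k a)].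
  move=> s; case: (boolP (b s)) => bs.
    by have /asboolP [X HX] := bs; exists X.
  by exists (fun _ _ => 0).
have [X HXs] := choice HX.
set w := fun s => p s * (b s)%:R.
have w0 : forall s, 0 <= w s by move=> s; rewrite /w mulr_ge0 // ltW.
have wz : forall s, ~~ b s -> w s = 0 by move=> s /negbTE bs; rewrite /w bs mulr0.
have wsum : \sum_s w s <= 1.
  rewrite -hp1; apply: ler_sum => s _; rewrite /w.
  by case: (b s); rewrite ?mulr1 ?mulr0 // ltW.
exists (fun k a => \sum_s w s * X s k a); split.
- move=> k a Ha; apply: sumr_ge0 => s _.
  case: (boolP (b s)) => bs; last by rewrite wz // mul0r.
  by have [h _ _ _] := HXs s bs; rewrite mulr_ge0 ?h ?w0.
- move=> k i hi1 hi2.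
  rewrite (exchange_big_dep xpredT) //= [in RHS](exchange_big_dep xpredT) //=.
  apply: eq_bigr => s _; rewrite -!mulr_sumr.
  case: (boolP (b s)) => bs; last by rewrite wz // !mul0r.
  have [_ h _ _] := HXs s bs.
  under eq_bigl do rewrite andbT. under [in RHS]eq_bigl do rewrite andbT.
  by rewrite h.
- move=> a Ha.
  rewrite (exchange_big_dep xpredT) //=.
  have cap0 : 0 <= u a * (y a)%:R by rewrite mulr_ge0 ?hu.
  apply: (@le_trans _ _ (\sum_s w s * (u a * (y a)%:R))).
    apply: ler_sum => s _; rewrite -mulr_sumr.
    case: (boolP (b s)) => bs; last by rewrite wz // !mul0r.
    have [_ _ h _] := HXs s bs; under eq_bigl do rewrite andbT.
    by rewrite ler_wpM2l ?h ?w0.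
  by rewrite -mulr_suml ler_piMl.
- move=> k.
  set z := [ffun s => ~~ b s].
  apply: (@le_trans _ _ (\sum_(s < S) d k s * p s * (1 - (z s)%:R))).
    apply: bigmin_le_F.
    by apply: le_trans hy; rewrite le_eqVlt; apply/orP; left; apply/eqP;
      apply: eq_bigr => s _; rewrite ffunE.
  rewrite (exchange_big_dep xpredT) //=.
  apply: ler_sum => s _; rewrite ffunE -mulr_sumr.
  rewrite /w; case: (boolP (b s)) => bs /=; last by rewrite subrr !mulr0 mul0r.
  have [_ _ _ h] := HXs s bs.
  rewrite subr0 !mulr1 mulrC; under eq_bigl do rewrite andbT.
  by rewrite ler_wpM2l ?h ?ltW.
Qed.
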